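(* The assignment $P(x_1,\dots,x_k)\mapsto\mathfrak q^{-\frac{k(k-1)}2}\prod_{1\le r\ne s\le k}\frac{x_r-x_s}{x_r-\mathfrak q^{-1}x_s}\cdot P(x_1^{-1},\dots,x_k^{-1})$ (for $P\in\mathbb S_k$, all $k$) defines an algebra isomorphism $\eta:\mathbb S\to\mathbb S^{\mathrm{DFK}}$, which restricts to an algebra isomorphism $S\to S^{\mathrm{DFK}}$.
   Context: Let $\mathfrak q,\mathfrak t\in\mathbb C^\times$ be such that $q_1=\mathfrak q$, $q_2=1/\mathfrak t$, $q_3=\mathfrak t/\mathfrak q$ are not roots of unity. $\mathbb S=\bigoplus_{k\ge0}\mathbb S_k$ with $\mathbb S_k$ the space of $f(x_1,\dots,x_k)/\prod_{1\le r\ne s\le k}(x_r-x_s)$, $f\in\mathbb C[x_1^{\pm1},\dots,x_k^{\pm1}]^{S(k)}$, with product $F\star G=\frac{1}{k!\ell!}\mathrm{Sym}_{x_1,\dots,x_{k+\ell}}\big(F(x_1,\dots,x_k)G(x_{k+1},\dots,x_{k+\ell})\prod_{r\le k<r'}\zeta(x_r/x_{r'})\big)$, $\zeta(z/w)=\frac{(z-q_1^{-1}w)(z-q_2^{-1}w)(z-q_3^{-1}w)}{(z-w)^3}$; $S\subset\mathbb S$ is the subspace of $F$ with $F=0$ whenever $\{x_1/x_2,x_2/x_3,x_3/x_1\}=\{q_1,q_2,q_3\}$. $\mathbb S^{\mathrm{DFK}}=\bigoplus_k\mathbb S^{\mathrm{DFK}}_k$ with $\mathbb S^{\mathrm{DFK}}_k$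 the space of $f(x_1,\dots,x_k)/\prod_{1\le r\ne s\le k}(x_r-\mathfrak q^{-1}x_s)$, $f\in\mathbb C[x_1^{\pm1},\dots,x_k^{\pm1}]^{S(k)}$, with the analogous shuffle product using $\zeta^{\mathrm{DFK}}(x)=\frac{(1-\mathfrak tx)(1-\mathfrak q\mathfrak t^{-1}x)}{(1-x)(1-\mathfrak qx)}$ in place of $\zeta$; $S^{\mathrm{DFK}}\subset\mathbb S^{\mathrm{DFK}}$ is the subspace of $F$ whose numerator $f$ vanishes whenever $\{x_1/x_2,x_2/x_3,x_3/x_1\}=\{\mathfrak q,1/\mathfrak t,\mathfrak t/\mathfrak q\}$. *)

(* Defs.v *)
From HB Require Import structures.
From mathcomp Require Import all_boot all_order all_algebra all_fingroup.
From mathcomp Require Import Rstruct.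
From mathcomp.real_closed Require Import complex.
From mathcomp Require Import mpoly.

Set Implicit Arguments.
Unset Strict Implicit.
Unset Printing Implicit Defensive.

Import Order.TTheory GRing.Theory Num.Theory.
Local Open Scope ring_scope.

Notation CC := (complex Rdefinitions.R).

Notation Kn n := {fraction {mpoly CC[n]}}.

Definition Xv (n : nat) (i : 'I_n) : Kn n := tofrac ('X_i : {mpoly CC[n]}).
Definition cst (n : nat) (c : CC) : Kn n := tofrac (mpolyC n c).

Definition fracmap (n m : nat) (f : {mpoly CC[n]} -> Kn m) (F : Kn n) : Kn m :=
  f (\n_(generic_quotient.repr F)) / f (\d_(generic_quotient.repr F)).

Definition permF (n : nat) (s : 'S_n) : Kn n -> Kn n :=
  fracmap (fun p => tofrac (msym s p)).

Definition invvars (n : nat) : Kn n -> Kn n :=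
  fracmap (mmap (@cst n) (fun i => (Xv i)^-1)).

Definition embL (k l : nat) : Kn k -> Kn (k + l) :=
  fracmap (mmap (@cst (k + l)) (fun i => Xv (lshift l i))).
Definition embR (k l : nat) : Kn l -> Kn (k + l) :=
  fracmap (mmap (@cst (k + l)) (fun i => Xv (rshift k i))).

Definition Sym (n : nat) (H : Kn n) : Kn n := \sum_(s : 'S_n) permF s H.

(* shuffle product with kernel zf (zf z w stands for zeta(z/w)) *)
Definition shuffle (zf : forall n, Kn n -> Kn n -> Kn n)
    (k l : nat) (F : Kn k) (G : Kn l) : Kn (k + l) :=
  cst (k + l) ((k`! * l`!)%:R^-1) *
  Sym (embL l F * embR k G *
       \prod_(r < k + l | (r < k)%N) \prod_(r' < k + l | (k <= r')%N)
          zf (k + l) (Xv r) (Xv r')).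

Section Params.
Variables (q t : CC).

Definition q1 : CC := q.
Definition q2 : CC := t^-1.
Definition q3 : CC := t / q.

Definition zetaS (n : nat) (z w : Kn n) : Kn n :=
  (z - cst n q1^-1 * w) * (z - cst n q2^-1 * w) * (z - cst n q3^-1 * w)
  / (z - w) ^+ 3.

Definition zetaDFK (n : nat) (z w : Kn n) : Kn n :=
  let x := z / w in
  (1 - cst n t * x) * (1 - cst n (q / t) * x) / ((1 - x) * (1 - cst n q * x)).

Definition shuffleS := shuffle zetaS.
Definition shuffleDFK := shuffle zetaDFK.

Definition DeltaS (n : nat) : Kn n :=
  \prod_(r < n) \prod_(s < n | s != r) (Xv r - Xv s).
Definition DeltaDFK (n : nat) : Kn n :=
  \prod_(r < n) \prod_(s < n | s != r) (Xv r - cst n q^-1 * Xv s).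

(* (x_1 ... x_n)^N : a symmetric Laurent polynomial is p / (x_1...x_n)^N
   with p a symmetric polynomial *)
Definition monoN (n N : nat) : {mpoly CC[n]} := \prod_(i < n) 'X_i ^+ N.

Definition wheel_locus (n : nat) (x : 'I_n -> CC) : Prop :=
  exists a b c : 'I_n, [/\ val a = 0%N, val b = 1%N, val c = 2%N &
    perm_eq [:: x a / x b; x b / x c; x c / x a] [:: q1; q2; q3]].

(* F in S_n (resp. S^DFK_n): F = f / Delta with f a symmetric Laurent polynomial *)
Definition inSS (n : nat) (F : Kn n) : Prop :=
  exists (p : {mpoly CC[n]}) (N : nat),
    p \is symmetric /\ F = tofrac p / (tofrac (monoN n N) * DeltaS n).
Definition inSDFK (n : nat) (F : Kn n) : Prop :=
  exists (p : {mpoly CC[n]}) (N : nat),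
    p \is symmetric /\ F = tofrac p / (tofrac (monoN n N) * DeltaDFK n).

(* the subspaces S_n and S^DFK_n cut out by the wheel conditions: the numerator
   vanishes on the locus (points with nonzero coordinates) *)
Definition inWS (n : nat) (F : Kn n) : Prop :=
  exists (p : {mpoly CC[n]}) (N : nat),
    [/\ p \is symmetric, F = tofrac p / (tofrac (monoN n N) * DeltaS n) &
        forall x : 'I_n -> CC, (forall i, x i != 0) -> wheel_locus x -> p.@[x] = 0].
Definition inWDFK (n : nat) (F : Kn n) : Prop :=
  exists (p : {mpoly CC[n]}) (N : nat),
    [/\ p \is symmetric, F = tofrac p / (tofrac (monoN n N) * DeltaDFK n) &
        forall x : 'I_n -> CC, (forall i, x i != 0) -> wheel_locus x -> p.@[x] = 0].

Definition etaMap (n : nat) (P : Kn n) : Kn n :=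
  cst n (q ^- ((n * (n - 1)) %/ 2)) *
  (\prod_(r < n) \prod_(s < n | s != r)
      ((Xv r - Xv s) / (Xv r - cst n q^-1 * Xv s))) *
  invvars P.

End Params.

(* Main.v *)
Require Import Defs.
From HB Require Import structures.
From mathcomp Require Import all_boot all_order all_algebra all_fingroup.
From mathcomp Require Import Rstruct.
From mathcomp.real_closed Require Import complex.
From mathcomp Require Import mpoly.
From mathcomp Require Import ring zify.
Import GRing.Theory.
Local Open Scope ring_scope.
Set Implicit Arguments.
Unset Strict Implicit.
Unset Printing Implicit Defensive.
From mathcomp Require Import generic_quotient.
Local Open Scope quotient_scope.

Lemma cst_is_zmod n : GRing.zmod_morphism (@cst n).
Proof. by move=> a b; rewrite /cst mpolyCB tofracB. Qed.
HB.instance Definition _ n := GRing.isZmodMorphism.Build CC (Kn n) (@cst n) (@cst_is_zmod n).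
Lemma cst_is_monoid n : GRing.monoid_morphism (@cst n).
Proof. by split; [rewrite /cst mpolyC1 tofrac1 | move=> a b; rewrite /cst mpolyCM tofracM]. Qed.
HB.instance Definition _ n := GRing.isMonoidMorphism.Build CC (Kn n) (@cst n) (@cst_is_monoid n).

Lemma frac_repr n (F : Kn n) :
  F = tofrac (\n_(repr F)) / tofrac (\d_(repr F)) /\ \d_(repr F) != 0.
Proof.
set x := repr F.
have dx : \d_x != 0 by apply: denom_ratioP.
split=> //.
apply: (@mulIf _ (tofrac \d_x)); first by rewrite tofrac_eq0.
rewrite divfK ?tofrac_eq0 //.
have -> : F = \pi_(Kn n) x by rewrite /x reprK.
unlock tofrac.
transitivity (\pi_(Kn n) (FracField.mulf x (Ratio \d_x 1))); first by rewrite FracField.pi_mul.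
apply/eqmodP; rewrite /= FracField.equivfE /FracField.mulf.
rewrite !numden_Ratio ?mulf_neq0 ?oner_neq0 //.
by rewrite !mulr1 mulrC.
Qed.

Lemma fieldB_frac (K : fieldType) (a b c d : K) : b != 0 -> d != 0 ->
  a / b - c / d = (a * d - c * b) / (b * d).
Proof. by move=> bn dn; field; rewrite bn dn. Qed.
Lemma fieldM_frac (K : fieldType) (a b c d : K) : b != 0 -> d != 0 ->
  a / b * (c / d) = (a * c) / (b * d).
Proof. by move=> bn dn; field; rewrite bn dn. Qed.

Section FracMap.
Variables (n m : nat) (f : {mpoly CC[n]} -> Kn m).
Hypotheses (fB : {morph f : a b / a - b}) (fM : {morph f : a b / a * b})
  (f1 : f 1 = 1) (f0 : forall p, f p = 0 -> p = 0).

Lemma fnz p : p != 0 -> f p != 0.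
Proof. by move=> pn; apply/eqP=> /f0 /eqP; rewrite (negbTE pn). Qed.

Lemma fracmapE a b : b != 0 -> fracmap f (tofrac a / tofrac b) = f a / f b.
Proof.
move=> bn; rewrite /fracmap.
case: (frac_repr (tofrac a / tofrac b)).
move: (\n_(repr (tofrac a / tofrac b))) (\d_(repr (tofrac a / tofrac b))) => a' b' E bn'.
have tb : tofrac b != 0 by rewrite tofrac_eq0.
have tb' : tofrac b' != 0 by rewrite tofrac_eq0.
have ab : a * b' = a' * b.
  apply/eqP. rewrite -(tofrac_eq (a * b')).
  rewrite !tofracM.
  apply/eqP.
  have := congr1 (fun z => z * tofrac b * tofrac b') E => /=.
  rewrite (divfK tb).
  rewrite [X in _ = X -> _]mulrAC (divfK tb') => ->.
  done.
have := congr1 f ab. rewrite !fM => e.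
have fb := fnz bn; have fb' := fnz bn'.
apply: (mulIf fb). apply: (mulIf fb').
rewrite (divfK fb) [LHS]mulrAC (divfK fb'). by rewrite e.
Qed.

Lemma fracmap_tofrac a : fracmap f (tofrac a) = f a.
Proof. by rewrite -[tofrac a]divr1 -tofrac1 fracmapE ?oner_neq0 // f1 divr1. Qed.

Lemma frac_ex (F : Kn n) : exists a b, b != 0 /\ F = tofrac a / tofrac b.
Proof. by case: (frac_repr F) => E bn; exists (\n_(repr F)), (\d_(repr F)). Qed.

Lemma fracmap_zmod : GRing.zmod_morphism (fracmap f).
Proof.
move=> F G.
case: (frac_ex F) => a [b [bn ->]]; case: (frac_ex G) => c [d [dn ->]].
have tb : tofrac b != 0 by rewrite tofrac_eq0.
have td : tofrac d != 0 by rewrite tofrac_eq0.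
have -> : tofrac a / tofrac b - tofrac c / tofrac d = tofrac (a * d - c * b) / tofrac (b * d).
  by rewrite tofracB !tofracM (fieldB_frac _ _ tb td).
rewrite !fracmapE; try exact: (mulf_neq0 bn dn); try exact: bn; try exact: dn.
rewrite fB !fM.
have fb := fnz bn; have fd := fnz dn.
by rewrite (fieldB_frac _ _ fb fd).
Qed.

Lemma fracmap_monoid : GRing.monoid_morphism (fracmap f).
Proof.
split; first by rewrite -tofrac1 fracmap_tofrac f1.
move=> F G.
case: (frac_ex F) => a [b [bn ->]]; case: (frac_ex G) => c [d [dn ->]].
have tb : tofrac b != 0 by rewrite tofrac_eq0.
have td : tofrac d != 0 by rewrite tofrac_eq0.
have -> : tofrac a / tofrac b * (tofrac c / tofrac d) = tofrac (a * c) / tofrac (b * d).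
  by rewrite !tofracM (fieldM_frac _ _ tb td).
rewrite !fracmapE; try exact: (mulf_neq0 bn dn); try exact: bn; try exact: dn.
rewrite !fM.
have fb := fnz bn; have fd := fnz dn.
by rewrite (fieldM_frac _ _ fb fd).
Qed.
End FracMap.

Lemma fieldD_frac (K : fieldType) (a b c d : K) : b != 0 -> d != 0 ->
  a / b + c / d = (a * d + c * b) / (b * d).
Proof. by move=> bn dn; field; rewrite bn dn. Qed.
Lemma field_invfrac (K : fieldType) (a x : K) : a != 0 -> x != 0 ->
  a / (x * a) = x^-1.
Proof. by move=> an xn; field; rewrite an xn. Qed.

Lemma mpolyX_neq0 n (i : 'I_n) : ('X_i : {mpoly CC[n]}) != 0.
Proof.
apply/eqP => /(congr1 (fun p : {mpoly CC[n]} => p@_U_(i))).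
by rewrite mcoeffXU eqxx mcoeff0 => /eqP; rewrite oner_eq0.
Qed.

Lemma Xv_neq0 n (i : 'I_n) : Xv i != 0.
Proof. by rewrite /Xv tofrac_eq0 mpolyX_neq0. Qed.

Lemma monoN0 n : monoN n 0 = 1.
Proof. by rewrite /monoN big1 // => i _; rewrite expr0. Qed.

Lemma monoND n N1 N2 : monoN n N1 * monoN n N2 = monoN n (N1 + N2).
Proof. by rewrite /monoN -big_split /=; apply: eq_bigr => i _; rewrite exprD. Qed.

Lemma monoN_neq0 n N : monoN n N != 0.
Proof. by rewrite /monoN; apply/prodf_neq0 => i _; rewrite expf_neq0 // mpolyX_neq0. Qed.

Lemma tmonoN_neq0 n N : tofrac (monoN n N) != 0 :> Kn n.
Proof. by rewrite tofrac_eq0 monoN_neq0. Qed.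

Section Laurent.
Variables (n : nat) (K : fieldType) (h : {rmorphism {mpoly CC[n]} -> K}).
Hypothesis hX : forall i, h 'X_i != 0.

Lemma hmonoN_neq0 N : h (monoN n N) != 0.
Proof. by rewrite /monoN rmorph_prod; apply/prodf_neq0 => i _; rewrite rmorphXn expf_neq0. Qed.

Definition LR (F : Kn n) (v : K) := exists a N,
  F = tofrac a / tofrac (monoN n N) /\ v = h a / h (monoN n N).

Lemma LR_add F G v w : LR F v -> LR G w -> LR (F + G) (v + w).
Proof.
case=> a [N [-> ->]]; case=> c [N' [-> ->]].
exists (a * monoN n N' + c * monoN n N), (N + N'); split.
  by rewrite -monoND tofracD !tofracM (fieldD_frac _ _ (tmonoN_neq0 _ _) (tmonoN_neq0 _ _)).
by rewrite -monoND rmorphD !rmorphM (fieldD_frac _ _ (hmonoN_neq0 _) (hmonoN_neq0 _)).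
Qed.

Lemma LR_mul F G v w : LR F v -> LR G w -> LR (F * G) (v * w).
Proof.
case=> a [N [-> ->]]; case=> c [N' [-> ->]].
exists (a * c), (N + N'); split.
  by rewrite -monoND !tofracM (fieldM_frac _ _ (tmonoN_neq0 _ _) (tmonoN_neq0 _ _)).
by rewrite -monoND !rmorphM (fieldM_frac _ _ (hmonoN_neq0 _) (hmonoN_neq0 _)).
Qed.

Lemma LR_poly p : LR (tofrac p) (h p).
Proof. by exists p, 0%N; rewrite monoN0 tofrac1 rmorph1 !divr1. Qed.

Lemma LR_cst c : LR (cst n c) (h c%:MP).
Proof. exact: LR_poly. Qed.

Lemma LR_X i : LR (Xv i) (h 'X_i).
Proof. exact: LR_poly. Qed.

Lemma LR_Xinv i : LR (Xv i)^-1 (h 'X_i)^-1.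
Proof.
exists (\prod_(j < n | j != i) 'X_j), 1%N.
have E : monoN n 1 = 'X_i * \prod_(j < n | j != i) 'X_j.
  by rewrite /monoN (bigD1 i) //= expr1; congr (_ * _); apply: eq_bigr => j _; rewrite expr1.
have an : \prod_(j < n | j != i) ('X_j : {mpoly CC[n]}) != 0.
  by apply/prodf_neq0 => j _; rewrite mpolyX_neq0.
rewrite E; split.
  rewrite tofracM field_invfrac //; first by rewrite tofrac_eq0.
  exact: Xv_neq0.
rewrite rmorphM field_invfrac //.
by rewrite rmorph_prod; apply/prodf_neq0 => j _.
Qed.

Lemma LR_1 : LR 1 1.
Proof. by rewrite -(rmorph1 h) -tofrac1; apply: LR_poly. Qed.

Lemma LR_0 : LR 0 0.
Proof. by rewrite -(rmorph0 h) -tofrac0; apply: LR_poly. Qed.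

Lemma LR_sum (I : Type) (r : seq I) (P : pred I) (F : I -> Kn n) (v : I -> K) :
  (forall i, P i -> LR (F i) (v i)) -> LR (\sum_(i <- r | P i) F i) (\sum_(i <- r | P i) v i).
Proof. by move=> H; apply: (big_ind2 LR LR_0 (fun F v G w => @LR_add F G v w)). Qed.

Lemma LR_prod (I : Type) (r : seq I) (P : pred I) (F : I -> Kn n) (v : I -> K) :
  (forall i, P i -> LR (F i) (v i)) -> LR (\prod_(i <- r | P i) F i) (\prod_(i <- r | P i) v i).
Proof. by move=> H; apply: (big_ind2 LR LR_1 (fun F v G w => @LR_mul F G v w)). Qed.

Lemma LR_exp F v k : LR F v -> LR (F ^+ k) (v ^+ k).
Proof. by move=> H; elim: k => [|k IH]; [rewrite !expr0; apply: LR_1 | rewrite !exprS; apply: LR_mul]. Qed.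

Lemma LR_uniq F v a N : LR F v -> F = tofrac a / tofrac (monoN n N) -> v = h a / h (monoN n N).
Proof.
case=> b [N' [-> ->]] E.
have t1 := tmonoN_neq0 n N; have t2 := tmonoN_neq0 n N'.
have e : b * monoN n N = a * monoN n N'.
  apply/eqP; rewrite -(tofrac_eq (b * monoN n N)) !tofracM; apply/eqP.
  have := congr1 (fun z => z * tofrac (monoN n N) * tofrac (monoN n N')) E => /=.
  rewrite (divfK t1) [X in X = _ -> _]mulrAC (divfK t2) => ->.
  done.
have h1 := hmonoN_neq0 N; have h2 := hmonoN_neq0 N'.
apply: (mulIf h1); apply: (mulIf h2).
rewrite [LHS]mulrAC (divfK h2) (divfK h1) -!rmorphM e.
done.
Qed.
End Laurent.

Notation fI n := (mmap (@cst n) (fun i : 'I_n => (Xv i)^-1)).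

Lemma tofracE n (p : {mpoly CC[n]}) :
  tofrac p = \sum_(m <- msupp p) cst n (p@_m) * \prod_(i < n) Xv i ^+ m i.
Proof.
rewrite [in LHS](mpolyE p) rmorph_sum; apply: eq_bigr => m _.
rewrite -mul_mpolyC rmorphM mpolyXE_id rmorph_prod; congr (_ * _).
by apply: eq_bigr => i _; rewrite rmorphXn.
Qed.

Lemma mmapXi n (S : comNzRingType) (f : {rmorphism CC -> S}) (g : 'I_n -> S) i :
  mmap f g 'X_i = g i.
Proof. by rewrite mmapX mmap1U. Qed.

Lemma LR_fI n (K : fieldType) (h : {rmorphism {mpoly CC[n]} -> K}) (hX : forall i, h 'X_i != 0) p :
  LR h (fI n p) (\sum_(m <- msupp p) h (p@_m)%:MP * \prod_(i < n) (h 'X_i)^-1 ^+ m i).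
Proof.
rewrite /mmap; apply: (LR_sum hX) => m _; apply: (LR_mul hX); first exact (LR_cst h _).
rewrite /mmap1; apply (LR_prod hX) => i _; apply (LR_exp hX); exact (LR_Xinv hX i).
Qed.

Lemma fI_Xi n i : fI n 'X_i = (Xv i)^-1.
Proof. exact: mmapXi. Qed.

Lemma fI_C n c : fI n c%:MP = cst n c.
Proof. exact: mmapC. Qed.

Lemma fI0 n p : fI n p = 0 -> p = 0.
Proof.
move=> E.
have hX : forall i, fI n 'X_i != 0 by move=> i; rewrite fI_Xi invr_eq0 Xv_neq0.
have H := LR_fI hX p.
have E' : fI n p = tofrac 0 / tofrac (monoN n 0) by rewrite E tofrac0 mul0r.
have := LR_uniq hX H E'.
rewrite rmorph0 mul0r.
have -> : \sum_(m <- msupp p) fI n (p@_m)%:MP * \prod_(i < n) (fI n 'X_i)^-1 ^+ m i = tofrac p.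
  rewrite tofracE; apply: eq_bigr => m _; rewrite fI_C; congr (_ * _).
  by apply: eq_bigr => i _; rewrite fI_Xi invrK.
by move/eqP; rewrite tofrac_eq0 => /eqP.
Qed.

Lemma invvars_zmod n : GRing.zmod_morphism (@invvars n).
Proof. apply: fracmap_zmod; [exact: rmorphB | exact: rmorphM | exact: fI0]. Qed.
Lemma invvars_monoid n : GRing.monoid_morphism (@invvars n).
Proof. apply: fracmap_monoid; [exact: rmorphM | exact: rmorph1 | exact: fI0]. Qed.
HB.instance Definition _ n := GRing.isZmodMorphism.Build (Kn n) (Kn n) (@invvars n) (@invvars_zmod n).
HB.instance Definition _ n := GRing.isMonoidMorphism.Build (Kn n) (Kn n) (@invvars n) (@invvars_monoid n).

Lemma invvars_tofrac n p : invvars (tofrac p) = fI n p.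
Proof. apply: fracmap_tofrac; [exact: rmorphM | exact: rmorph1 | exact: fI0]. Qed.
Lemma invvars_Xv n (i : 'I_n) : invvars (Xv i) = (Xv i)^-1.
Proof. by rewrite /Xv invvars_tofrac fI_Xi. Qed.
Lemma invvars_cst n c : invvars (cst n c) = cst n c.
Proof. by rewrite /cst invvars_tofrac fI_C. Qed.

Lemma frac_ex' n (F : Kn n) : exists a b, b != 0 /\ F = tofrac a / tofrac b.
Proof. by case: (frac_repr F) => E bn; exists (\n_(repr F)), (\d_(repr F)). Qed.

Lemma hom_ext n m (φ ψ : {rmorphism Kn n -> Kn m}) :
  (forall c, φ (cst n c) = ψ (cst n c)) -> (forall i, φ (Xv i) = ψ (Xv i)) -> forall F, φ F = ψ F.
Proof.
move=> Hc HX F.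
have E p : φ (tofrac p) = ψ (tofrac p).
  rewrite tofracE !rmorph_sum; apply: eq_bigr => mm _.
  rewrite !rmorphM !rmorph_prod Hc; congr (_ * _); apply: eq_bigr => i _.
  by rewrite !rmorphXn HX.
case: (frac_ex' F) => a [b [bn ->]].
by rewrite !fmorph_div !E.
Qed.

Lemma invvars_V n (x : Kn n) : invvars (x^-1) = (invvars x)^-1.
Proof. exact: fmorphV. Qed.

Lemma invvarsK n (F : Kn n) : invvars (invvars F) = F.
Proof.
change ((@invvars n \o @invvars n) F = idfun F).
apply: hom_ext => [c|i].
  by change (invvars (invvars (cst n c)) = cst n c); rewrite !invvars_cst.
change (invvars (invvars (Xv i)) = Xv i).
by rewrite invvars_Xv invvars_V invvars_Xv invrK.
Qed.

Lemma msymK n (s : 'S_n) (p : {mpoly CC[n]}) : msym s^-1 (msym s p) = p.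
Proof. by rewrite -msymMm mulgV msym1m. Qed.

Lemma fP0 n (s : 'S_n) (p : {mpoly CC[n]}) : tofrac (msym s p) = 0 -> p = 0.
Proof. by move/eqP; rewrite tofrac_eq0 => /eqP E; rewrite -(msymK s p) E msym0. Qed.

Lemma permF_zmod n (s : 'S_n) : GRing.zmod_morphism (permF s).
Proof.
apply: fracmap_zmod; [by move=> a b; rewrite msymB tofracB | by move=> a b; rewrite msymM tofracM | exact: fP0].
Qed.
Lemma permF_monoid n (s : 'S_n) : GRing.monoid_morphism (permF s).
Proof.
apply: fracmap_monoid; [by move=> a b; rewrite msymM tofracM | by rewrite msym1 tofrac1 | exact: fP0].
Qed.
HB.instance Definition _ n s := GRing.isZmodMorphism.Build (Kn n) (Kn n) (@permF n s) (@permF_zmod n s).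
HB.instance Definition _ n s := GRing.isMonoidMorphism.Build (Kn n) (Kn n) (@permF n s) (@permF_monoid n s).

Lemma permF_tofrac n (s : 'S_n) (p : {mpoly CC[n]}) : permF s (tofrac p) = tofrac (msym s p).
Proof.
apply: (fracmap_tofrac (f := fun p => tofrac (msym s p))); [by move=> a b; rewrite msymM tofracM | by rewrite msym1 tofrac1 | exact: fP0].
Qed.

Lemma msymXi n (s : 'S_n) (i : 'I_n) : msym s ('X_i : {mpoly CC[n]}) = 'X_(s i).
Proof. by rewrite /msym mmapX mmap1U. Qed.

Lemma permF_Xv n (s : 'S_n) i : permF s (Xv i) = Xv (s i).
Proof. by rewrite /Xv permF_tofrac msymXi. Qed.
Lemma permF_cst n (s : 'S_n) c : permF s (cst n c) = cst n c.
Proof. by rewrite /cst permF_tofrac /msym mmapC. Qed.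
Lemma permF_V n (s : 'S_n) (x : Kn n) : permF s (x^-1) = (permF s x)^-1.
Proof. exact: fmorphV. Qed.

Lemma tofrac_mmapC n m (g : 'I_n -> {mpoly CC[m]}) p :
  tofrac (mmap (@mpolyC m CC) g p) = mmap (@cst m) (fun i => tofrac (g i)) p.
Proof.
rewrite /mmap rmorph_sum; apply: eq_bigr => mm _.
rewrite rmorphM /mmap1 rmorph_prod; congr (_ * _).
by apply: eq_bigr => i _; rewrite rmorphXn.
Qed.

Lemma mpoly_expand n (S : comNzRingType) (φ : {rmorphism {mpoly CC[n]} -> S}) p :
  φ p = \sum_(m <- msupp p) φ (p@_m)%:MP * \prod_(i < n) φ 'X_i ^+ m i.
Proof.
rewrite [in LHS](mpolyE p) rmorph_sum; apply: eq_bigr => mm _.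
rewrite -mul_mpolyC rmorphM mpolyXE_id rmorph_prod; congr (_ * _).
by apply: eq_bigr => i _; rewrite rmorphXn.
Qed.

Lemma mmap_leftinv n m (g : 'I_n -> {mpoly CC[m]}) (r : 'I_m -> {mpoly CC[n]}) :
  (forall i, mmap (@mpolyC n CC) r (g i) = 'X_i) ->
  forall p, mmap (@mpolyC n CC) r (mmap (@mpolyC m CC) g p) = p.
Proof.
move=> H p.
rewrite [in RHS](mpolyE p).
rewrite [mmap (@mpolyC m CC) g p]/mmap rmorph_sum; apply: eq_bigr => mm _.
rewrite rmorphM /= mmapC -mul_mpolyC mpolyXE_id /mmap1 rmorph_prod; congr (_ * _).
by apply: eq_bigr => i _; rewrite rmorphXn /= H.
Qed.

Definition rL (k l : nat) : 'I_(k + l) -> {mpoly CC[k]} :=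
  fun j => match split j with inl i => 'X_i | inr _ => 0 end.
Definition rR (k l : nat) : 'I_(k + l) -> {mpoly CC[l]} :=
  fun j => match split j with inl _ => 0 | inr i => 'X_i end.

Lemma fL0 k l (p : {mpoly CC[k]}) : mmap (@cst (k + l)) (fun i => Xv (lshift l i)) p = 0 -> p = 0.
Proof.
move=> E0.
have /eqP : tofrac (mmap (@mpolyC (k + l) CC) (fun i => 'X_(lshift l i)) p) = 0 by rewrite tofrac_mmapC; exact: E0.
rewrite tofrac_eq0 => /eqP E.
have H : forall i, mmap (@mpolyC k CC) (@rL k l) ((fun i => 'X_(lshift l i)) i) = 'X_i.
  by move=> i; rewrite mmapXi /rL (unsplitK (inl i)).
by rewrite -(mmap_leftinv H p) E rmorph0.
Qed.

Lemma fR0 k l (p : {mpoly CC[l]}) : mmap (@cst (k + l)) (fun i => Xv (rshift k i)) p = 0 -> p = 0.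
Proof.
move=> E0.
have /eqP : tofrac (mmap (@mpolyC (k + l) CC) (fun i => 'X_(rshift k i)) p) = 0 by rewrite tofrac_mmapC; exact: E0.
rewrite tofrac_eq0 => /eqP E.
have H : forall i, mmap (@mpolyC l CC) (@rR k l) ((fun i => 'X_(rshift k i)) i) = 'X_i.
  by move=> i; rewrite mmapXi /rR (unsplitK (inr i)).
by rewrite -(mmap_leftinv H p) E rmorph0.
Qed.

Lemma embL_zmod k l : GRing.zmod_morphism (@embL k l).
Proof. apply: fracmap_zmod; [exact: rmorphB | exact: rmorphM | exact: fL0]. Qed.
Lemma embL_monoid k l : GRing.monoid_morphism (@embL k l).
Proof. apply: fracmap_monoid; [exact: rmorphM | exact: rmorph1 | exact: fL0]. Qed.
HB.instance Definition _ k l := GRing.isZmodMorphism.Build (Kn k) (Kn (k + l)) (@embL k l) (@embL_zmod k l).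
HB.instance Definition _ k l := GRing.isMonoidMorphism.Build (Kn k) (Kn (k + l)) (@embL k l) (@embL_monoid k l).
Lemma embR_zmod k l : GRing.zmod_morphism (@embR k l).
Proof. apply: fracmap_zmod; [exact: rmorphB | exact: rmorphM | exact: fR0]. Qed.
Lemma embR_monoid k l : GRing.monoid_morphism (@embR k l).
Proof. apply: fracmap_monoid; [exact: rmorphM | exact: rmorph1 | exact: fR0]. Qed.
HB.instance Definition _ k l := GRing.isZmodMorphism.Build (Kn l) (Kn (k + l)) (@embR k l) (@embR_zmod k l).
HB.instance Definition _ k l := GRing.isMonoidMorphism.Build (Kn l) (Kn (k + l)) (@embR k l) (@embR_monoid k l).

Lemma embL_tofrac k l p : @embL k l (tofrac p) = mmap (@cst (k + l)) (fun i => Xv (lshift l i)) p.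
Proof. apply: fracmap_tofrac; [exact: rmorphM | exact: rmorph1 | exact: fL0]. Qed.
Lemma embR_tofrac k l p : @embR k l (tofrac p) = mmap (@cst (k + l)) (fun i => Xv (rshift k i)) p.
Proof. apply: fracmap_tofrac; [exact: rmorphM | exact: rmorph1 | exact: fR0]. Qed.
Lemma embL_Xv k l i : @embL k l (Xv i) = Xv (lshift l i).
Proof. by rewrite /Xv embL_tofrac mmapXi. Qed.
Lemma embR_Xv k l i : @embR k l (Xv i) = Xv (rshift k i).
Proof. by rewrite /Xv embR_tofrac mmapXi. Qed.
Lemma embL_cst k l c : @embL k l (cst k c) = cst (k + l) c.
Proof. by rewrite /cst embL_tofrac mmapC. Qed.
Lemma embR_cst k l c : @embR k l (cst l c) = cst (k + l) c.
Proof. by rewrite /cst embR_tofrac mmapC. Qed.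
Lemma embL_V k l (x : Kn k) : @embL k l (x^-1) = (embL l x)^-1.
Proof. exact: fmorphV. Qed.
Lemma embR_V k l (x : Kn l) : @embR k l (x^-1) = (embR k x)^-1.
Proof. exact: fmorphV. Qed.

Lemma invvars_permF n (s : 'S_n) (F : Kn n) : invvars (permF s F) = permF s (invvars F).
Proof.
change ((@invvars n \o @permF n s) F = (@permF n s \o @invvars n) F).
apply: hom_ext => [c|i].
  by change (invvars (permF s (cst n c)) = permF s (invvars (cst n c))); rewrite permF_cst !invvars_cst permF_cst.
change (invvars (permF s (Xv i)) = permF s (invvars (Xv i))).
by rewrite permF_Xv !invvars_Xv permF_V permF_Xv.
Qed.

Lemma invvars_embL k l (F : Kn k) : invvars (embL l F) = embL l (invvars F).
Proof.
change ((@invvars (k + l) \o @embL k l) F = (@embL k l \o @invvars k) F).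
apply: hom_ext => [c|i].
  by change (invvars (embL l (cst k c)) = embL l (invvars (cst k c))); rewrite embL_cst !invvars_cst embL_cst.
change (invvars (embL l (Xv i)) = embL l (invvars (Xv i))).
by rewrite embL_Xv !invvars_Xv embL_V embL_Xv.
Qed.

Lemma invvars_embR k l (F : Kn l) : invvars (embR k F) = embR k (invvars F).
Proof.
change ((@invvars (k + l) \o @embR k l) F = (@embR k l \o @invvars l) F).
apply: hom_ext => [c|i].
  by change (invvars (embR k (cst l c)) = embR k (invvars (cst l c))); rewrite embR_cst !invvars_cst embR_cst.
change (invvars (embR k (Xv i)) = embR k (invvars (Xv i))).
by rewrite embR_Xv !invvars_Xv embR_V embR_Xv.
Qed.

Lemma dprod_perm (R : comRingType) n (σ : 'S_n) (h : 'I_n -> 'I_n -> R) :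
  \prod_(r < n) \prod_(s < n | s != r) h (σ r) (σ s) = \prod_(r < n) \prod_(s < n | s != r) h r s.
Proof.
rewrite [RHS](reindex_inj (@perm_inj _ σ)) /=; apply: eq_bigr => r _.
rewrite [RHS](reindex_inj (@perm_inj _ σ)) /=; apply: eq_bigl => s.
by rewrite (inj_eq (@perm_inj _ σ)).
Qed.

Lemma acl (R : comRingType) (a b c d : R) : a * b * (c * d) = a * d * (b * c).
Proof. by ring. Qed.

Lemma dprod_split (R : comRingType) k l (g : 'I_(k + l) -> 'I_(k + l) -> R) :
  \prod_(r < k + l) \prod_(s < k + l | s != r) g r s =
  (\prod_(r < k) \prod_(s < k | s != r) g (lshift l r) (lshift l s)) *
  (\prod_(r < l) \prod_(s < l | s != r) g (rshift k r) (rshift k s)) *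
  \prod_(r < k) \prod_(s < l) (g (lshift l r) (rshift k s) * g (rshift k s) (lshift l r)).
Proof.
rewrite big_split_ord /=.
have E1 r : \prod_(s < k + l | s != lshift l r) g (lshift l r) s =
   \prod_(s < k | s != r) g (lshift l r) (lshift l s) * \prod_(s < l) g (lshift l r) (rshift k s).
  rewrite big_split_ord /=; congr (_ * _); apply: eq_bigl => s /=; by rewrite ?eq_lshift ?eq_rlshift ?eq_lrshift ?eq_rshift.
have E2 r : \prod_(s < k + l | s != rshift k r) g (rshift k r) s =
   \prod_(s < k) g (rshift k r) (lshift l s) * \prod_(s < l | s != r) g (rshift k r) (rshift k s).
  rewrite big_split_ord /=; congr (_ * _); apply: eq_bigl => s /=; by rewrite ?eq_lshift ?eq_rlshift ?eq_lrshift ?eq_rshift.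
rewrite (eq_bigr _ (fun r _ => E1 r)) (eq_bigr _ (fun r _ => E2 r)) !big_split /=.
rewrite [in RHS](eq_bigr _ (fun r _ => big_split _ _ _ _ _)) big_split /=.
rewrite [X in _ = _ * (_ * X)]exchange_big /=.
exact: acl.
Qed.

Lemma dprod_filt (R : comRingType) k l (f : 'I_(k + l) -> 'I_(k + l) -> R) :
  \prod_(r < k + l | (r < k)%N) \prod_(r' < k + l | (k <= r')%N) f r r' =
  \prod_(r < k) \prod_(s < l) f (lshift l r) (rshift k s).
Proof.
rewrite big_split_ord /= [X in _ * X]big_pred0; last by move=> i /=; rewrite ltnNge leq_addr.
rewrite mulr1; apply: eq_big => [r|r _] /=; first by rewrite ltn_ord.
rewrite big_split_ord /= big_pred0 ?mul1r; last by move=> i /=; rewrite leqNgt ltn_ord.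
by apply: eq_bigl => s /=; rewrite leq_addr.
Qed.

Lemma bin2D k l : ('C(k + l, 2) = 'C(k, 2) + 'C(l, 2) + k * l)%N.
Proof.
elim: l => [|l IH]; first by rewrite addn0 bin0n muln0 !addn0.
rewrite addnS !binS bin1 IH !bin1 mulnS. lia.
Qed.
Lemma e_split k l : (((k + l) * (k + l - 1)) %/ 2 = (k * (k - 1)) %/ 2 + (l * (l - 1)) %/ 2 + k * l)%N.
Proof. by rewrite !divn2 !subn1 -!bin2 bin2D. Qed.

Lemma pair_id (K : fieldType) (Q T a b : K) : Q != 0 -> T != 0 -> a != 0 -> b != 0 ->
  -1 * a + 1 * b != 0 -> -1 * a + Q * b != 0 -> Q * a + -1 * b != 0 -> - Q * a + 1 * b != 0 ->
  Q^-1 * ((a - b) / (a - Q^-1 * b) * ((b - a) / (b - Q^-1 * a))) *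
  ((a^-1 - Q^-1 * b^-1) * (a^-1 - T^-1^-1 * b^-1) * (a^-1 - (T / Q)^-1 * b^-1) / (a^-1 - b^-1) ^+ 3)
  = (1 - T * (a / b)) * (1 - Q / T * (a / b)) / ((1 - a / b) * (1 - Q * (a / b))).
Proof.
move=> hQ hT ha hb h1 h2 h3 h4.
have f1 : b - a != 0 by move: h1; rewrite mulN1r mul1r addrC.
have f2 : b * Q - a != 0 by move: h2; rewrite mulN1r addrC mulrC.
have f3 : a * Q - b != 0 by move: h3; rewrite mulN1r mulrC.
have f4 : b - Q * a != 0 by move: h4; rewrite mulNr mul1r addrC.
field. by rewrite f1 f2 f3 f4 hQ hT ha hb oner_neq0.
Qed.

Lemma lin_neq0 n (r s : 'I_n) (u v : CC) : r != s -> u != 0 ->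
  cst n u * Xv r + cst n v * Xv s != 0.
Proof.
move=> rs un.
have -> : cst n u * Xv r + cst n v * Xv s = tofrac (u%:MP * 'X_r + v%:MP * 'X_s).
  by rewrite tofracD !tofracM.
rewrite tofrac_eq0; apply/eqP => /(congr1 (fun p : {mpoly CC[n]} => p@_U_(r))).
rewrite mcoeffD !mcoeffCM !mcoeffXU eqxx mcoeff0.
have -> : (s == r) = false by apply/negbTE; rewrite eq_sym.
by rewrite mulr0 addr0 mulr1 => /eqP; rewrite (negbTE un).
Qed.

Lemma lin_neq0' n (r s : 'I_n) (c : CC) : r != s -> Xv r - cst n c * Xv s != 0.
Proof.
move=> rs; have := @lin_neq0 n r s 1 (- c) rs (oner_neq0 _).
by rewrite rmorph1 mul1r rmorphN mulNr.
Qed.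

Definition gq (q : CC) n (r s : 'I_n) : Kn n := (Xv r - Xv s) / (Xv r - cst n q^-1 * Xv s).
Definition Pq (q : CC) n := \prod_(r < n) \prod_(s < n | s != r) gq q r s.

Lemma etaE q n (F : Kn n) : etaMap q F = cst n (q ^- ((n * (n - 1)) %/ 2)) * Pq q n * invvars F.
Proof. by []. Qed.

Lemma gq_neq0 q n (r s : 'I_n) : s != r -> gq q r s != 0.
Proof.
move=> sr; rewrite eq_sym in sr.
rewrite /gq mulf_neq0 ?invr_eq0 ?lin_neq0' //.
by have := lin_neq0' 1 sr; rewrite rmorph1 mul1r.
Qed.

Lemma Pq_neq0 q n : Pq q n != 0.
Proof. by apply/prodf_neq0 => r _; apply/prodf_neq0 => s sr; apply: gq_neq0. Qed.

Lemma permF_gq q n (σ : 'S_n) r s : permF σ (gq q r s) = gq q (σ r) (σ s).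
Proof. by rewrite /gq rmorphM /= permF_V !rmorphB /= !rmorphM /= !permF_Xv permF_cst. Qed.

Lemma permF_Pq q n (σ : 'S_n) : permF σ (Pq q n) = Pq q n.
Proof.
rewrite /Pq rmorph_prod /=.
rewrite (eq_bigr (fun r => \prod_(s < n | s != r) gq q (σ r) (σ s))); first exact: dprod_perm.
by move=> r _; rewrite rmorph_prod; apply: eq_bigr => s _ /=; rewrite permF_gq.
Qed.

Lemma embL_gq q k l (r s : 'I_k) : embL l (gq q r s) = gq q (lshift l r) (lshift l s).
Proof. by rewrite /gq rmorphM /= embL_V !rmorphB /= !rmorphM /= !embL_Xv embL_cst. Qed.
Lemma embR_gq q k l (r s : 'I_l) : embR k (gq q r s) = gq q (rshift k r) (rshift k s).
Proof. by rewrite /gq rmorphM /= embR_V !rmorphB /= !rmorphM /= !embR_Xv embR_cst. Qed.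

Lemma prod_const_ord (R : comRingType) (y : R) n : \prod_(i < n) y = y ^+ n.
Proof. by elim: n => [|n IH]; [rewrite big_ord0 expr0 | rewrite big_ord_recr IH exprSr]. Qed.

Lemma prod_const2 (R : comRingType) (y : R) k l : \prod_(r < k) \prod_(s < l) y = y ^+ (k * l).
Proof.
rewrite (eq_bigr (fun=> y ^+ l)) => [|r _]; last exact: prod_const_ord.
by rewrite prod_const_ord -exprM mulnC.
Qed.

Lemma triple_split (R : comRingType) k l (A B C : 'I_k -> 'I_l -> R) :
  (\prod_(r < k) \prod_(s < l) A r s) * (\prod_(r < k) \prod_(s < l) B r s) * (\prod_(r < k) \prod_(s < l) C r s)
  = \prod_(r < k) \prod_(s < l) (A r s * B r s * C r s).
Proof.
rewrite -!big_split /=; apply: eq_bigr => r _.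
by rewrite -!big_split.
Qed.

Lemma rearr1 (R : comRingType) (x y z w : R) : x * y * (z * w) = z * (x * y * w).
Proof. by ring. Qed.

Lemma rearr2 (R : comRingType) (A B C D E Fx Gx H Z W X1 X2 : R) :
  A * (B * C * D) * E = Fx * B * (Gx * C) * W ->
  A * (B * C * D) * (X1 * X2 * E) = Fx * B * X1 * (Gx * C * X2) * W.
Proof. move=> h; rewrite -[RHS]/(Fx * B * X1 * (Gx * C * X2) * W).
have -> : Fx * B * X1 * (Gx * C * X2) * W = (Fx * B * (Gx * C) * W) * (X1 * X2) by ring.
by rewrite -h; ring.
Qed.

Lemma rmorph_zetaS q t n m (φ : {rmorphism Kn n -> Kn m}) (z w : Kn n) :
  (forall c, φ (cst n c) = cst m c) -> φ (zetaS q t z w) = zetaS q t (φ z) (φ w).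
Proof.
move=> Hc; rewrite /zetaS rmorphM (fmorphV φ) (rmorphXn φ) !rmorphM !rmorphB !rmorphM !Hc.
done. Qed.

Lemma cst_neq0 n (c : CC) : c != 0 -> cst n c != 0.
Proof. by move=> cn; rewrite fmorph_eq0. Qed.

Lemma pair_Kn q t (hq : q != 0) (ht : t != 0) N (i j : 'I_N) : i != j ->
  cst N q^-1 * (gq q i j * gq q j i) * zetaS q t (Xv i)^-1 (Xv j)^-1 = zetaDFK q t (Xv i) (Xv j).
Proof.
move=> ij; rewrite /gq /zetaS /zetaDFK /= /q1 /q2 /q3.
rewrite !fmorphV !fmorph_div.
have m1 : (-1 : CC) != 0 by rewrite oppr_eq0 oner_eq0.
have mq : - q != 0 by rewrite oppr_eq0.
have h1 := @lin_neq0 N i j (-1) 1 ij m1.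
have h2 := @lin_neq0 N i j (-1) q ij m1.
have h3 := @lin_neq0 N i j q (-1) ij hq.
have h4 := @lin_neq0 N i j (-q) 1 ij mq.
rewrite rmorphN1 rmorph1 in h1; rewrite rmorphN1 in h2; rewrite rmorphN1 in h3; rewrite rmorphN rmorph1 in h4.
have hQ : cst N q != 0 by apply: cst_neq0.
have hT : cst N t != 0 by apply: cst_neq0.
exact: (pair_id hQ hT (Xv_neq0 i) (Xv_neq0 j) h1 h2 h3 h4).
Qed.

Lemma rearr3 (R : comRingType) (A B Qp EL ER Cr IZ ZD : R) :
  Qp * Cr * IZ = ZD -> A * B * Qp * (EL * ER * Cr) * IZ = A * EL * (B * ER) * ZD.
Proof. move=> h; rewrite -h; ring. Qed.

Lemma rearr4 (R : comRingType) (C P IZ A EL B ER ZD X1 X2 : R) :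
  C * P * IZ = A * EL * (B * ER) * ZD -> C * P * (X1 * X2 * IZ) = A * EL * X1 * (B * ER * X2) * ZD.
Proof.
move=> h; transitivity ((C * P * IZ) * (X1 * X2)); first by ring.
rewrite h; ring.
Qed.

Lemma embL_Pq q k l : embL l (Pq q k) = \prod_(r < k) \prod_(s < k | s != r) gq q (lshift l r) (lshift l s).
Proof.
rewrite /Pq rmorph_prod; apply: eq_bigr => r _.
by rewrite rmorph_prod; apply: eq_bigr => s _ /=; rewrite embL_gq.
Qed.
Lemma embR_Pq q k l : embR k (Pq q l) = \prod_(r < l) \prod_(s < l | s != r) gq q (rshift k r) (rshift k s).
Proof.
rewrite /Pq rmorph_prod; apply: eq_bigr => r _.
by rewrite rmorph_prod; apply: eq_bigr => s _ /=; rewrite embR_gq.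
Qed.

Lemma Pq_split q k l : Pq q (k + l) = embL l (Pq q k) * embR k (Pq q l) *
  \prod_(r < k) \prod_(s < l) (gq q (lshift l r) (rshift k s) * gq q (rshift k s) (lshift l r)).
Proof. by rewrite embL_Pq embR_Pq /Pq dprod_split. Qed.

Lemma q_split (q : CC) k l :
  cst (k + l) (q ^- (((k + l) * (k + l - 1)) %/ 2)) =
  cst (k + l) (q ^- ((k * (k - 1)) %/ 2)) * cst (k + l) (q ^- ((l * (l - 1)) %/ 2)) *
  \prod_(r < k) \prod_(s < l) cst (k + l) q^-1.
Proof.
rewrite e_split !exprD !invfM !rmorphM /= -[q ^- (k * l)]exprVn -[q^-1 ^+ (k * l)]prod_const2 rmorph_prod.
by congr (_ * _); apply: eq_bigr => r _; rewrite rmorph_prod.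
Qed.

Lemma invvars_Z q t k l :
  invvars (\prod_(r < k + l | (r < k)%N) \prod_(r' < k + l | (k <= r')%N) zetaS q t (Xv r) (Xv r'))
  = \prod_(r < k) \prod_(s < l) zetaS q t (Xv (lshift l r))^-1 (Xv (rshift k s))^-1.
Proof.
rewrite (dprod_filt (fun r r' => zetaS q t (Xv r) (Xv r'))) rmorph_prod; apply: eq_bigr => r _.
rewrite rmorph_prod; apply: eq_bigr => s _ /=.
rewrite rmorph_zetaS /=; first by rewrite !invvars_Xv.
by move=> c; rewrite invvars_cst.
Qed.

Lemma KEY2 q t (hq : q != 0) (ht : t != 0) k l :
  cst (k + l) (q ^- (((k + l) * (k + l - 1)) %/ 2)) * Pq q (k + l) *
  invvars (\prod_(r < k + l | (r < k)%N) \prod_(r' < k + l | (k <= r')%N) zetaS q t (Xv r) (Xv r'))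
  = cst (k + l) (q ^- ((k * (k - 1)) %/ 2)) * embL l (Pq q k) *
    (cst (k + l) (q ^- ((l * (l - 1)) %/ 2)) * embR k (Pq q l)) *
    \prod_(r < k + l | (r < k)%N) \prod_(r' < k + l | (k <= r')%N) zetaDFK q t (Xv r) (Xv r').
Proof.
rewrite q_split Pq_split invvars_Z (dprod_filt (fun r r' => zetaDFK q t (Xv r) (Xv r'))).
apply: rearr3.
rewrite triple_split; apply: eq_bigr => r _; apply: eq_bigr => s _.
apply: pair_Kn => //.
by rewrite eq_lrshift.
Qed.

Lemma eta_shuffle q t (hq : q != 0) (ht : t != 0) k l (F : Kn k) (G : Kn l) :
  etaMap q (shuffleS q t F G) = shuffleDFK q t (etaMap q F) (etaMap q G).
Proof.
rewrite /shuffleS /shuffleDFK /shuffle /Sym.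
rewrite [etaMap q _]etaE rmorphM /= invvars_cst rmorph_sum /=.
rewrite rearr1; congr (_ * _).
rewrite mulr_sumr; apply: eq_bigr => s _.
rewrite invvars_permF -(permF_Pq q s) -(permF_cst s) -!rmorphM /=; congr (permF s _).
rewrite rmorphM /= rmorphM /= invvars_embL invvars_embR !etaE !rmorphM /= !embL_cst !embR_cst.
apply: rearr4.
exact: KEY2.
Qed.

Lemma meval_msym n (v : 'I_n -> CC) (s : 'S_n) (p : {mpoly CC[n]}) :
  (msym s p).@[v] = p.@[fun i => v (s i)].
Proof.
rewrite [RHS]mevalE /msym /mmap rmorph_sum; apply: eq_bigr => m _.
rewrite rmorphM /= mevalC /mmap1 rmorph_prod; congr (_ * _).
by apply: eq_bigr => i _; rewrite rmorphXn /= mevalXU.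
Qed.

Lemma inv_div_inv (a b : CC) : a^-1 / b^-1 = b / a.
Proof. by rewrite invrK mulrC. Qed.

Lemma wheel_inv q t n (x : 'I_n -> CC) (p : {mpoly CC[n]}) :
  p \is symmetric -> (forall i, x i != 0) -> wheel_locus q t x ->
  (forall y : 'I_n -> CC, (forall i, y i != 0) -> wheel_locus q t y -> p.@[y] = 0) ->
  p.@[fun i => (x i)^-1] = 0.
Proof.
move=> /issymP sp xn [a [b [c [va vb vc hp]]]] Hp.
have ab : a != b by apply/eqP => E; move: va vb; rewrite E => ->.
have ac : a != c by apply/eqP => E; move: va vc; rewrite E => ->.
set y := fun i => (x (tperm b c i))^-1.
have -> : p.@[fun i => (x i)^-1] = p.@[fun i => y (tperm b c i)].
  by apply: meval_eq => i; rewrite /y tpermK.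
rewrite -meval_msym sp; apply: Hp => [i|]; first by rewrite /y invr_eq0.
exists a, b, c; split => //.
have e1 : tperm b c b = c := tpermL b c.
have e2 : tperm b c c = b := tpermR b c.
have e3 : tperm b c a = a by rewrite tpermD // eq_sym.
rewrite /y e1 e2 e3 !inv_div_inv.
apply: perm_trans hp.
by rewrite -perm_rev /=.
Qed.

Lemma pair2 (K : fieldType) (a b : K) : a != 0 -> b != 0 -> b - a != 0 ->
  (a - b) / (a^-1 - b^-1) = -1 * (a * b).
Proof. by move=> an bn ba; field; rewrite an bn mulN1r ba. Qed.

Lemma DeltaS_neq0 n : DeltaS n != 0.
Proof.
apply/prodf_neq0 => r _; apply/prodf_neq0 => s sr.
by have := @lin_neq0' n r s 1; rewrite rmorph1 mul1r eq_sym; apply.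
Qed.

Lemma DeltaDFK_neq0 q n : DeltaDFK q n != 0.
Proof.
apply/prodf_neq0 => r _; apply/prodf_neq0 => s sr.
by apply: lin_neq0'; rewrite eq_sym.
Qed.

Lemma W_prod n : DeltaS n / invvars (DeltaS n) =
  \prod_(r < n) \prod_(s < n | s != r) (cst n (-1) * (Xv r * Xv s)).
Proof.
rewrite /DeltaS [invvars _]rmorph_prod -prodf_div; apply: eq_bigr => r _.
rewrite rmorph_prod -prodf_div; apply: eq_bigr => s sr /=.
rewrite rmorphB /= !invvars_Xv rmorphN1 pair2 //; try exact: Xv_neq0.
by have := @lin_neq0' n s r 1 sr; rewrite rmorph1 mul1r.
Qed.

Lemma tofrac_mono n N : tofrac (monoN n N) = \prod_(i < n) Xv i ^+ N.
Proof. by rewrite /monoN rmorph_prod; apply: eq_bigr => i _; rewrite rmorphXn. Qed.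

Lemma permF_mono n (σ : 'S_n) N : permF σ (tofrac (monoN n N)) = tofrac (monoN n N).
Proof.
rewrite !tofrac_mono rmorph_prod.
rewrite [RHS](reindex_inj (@perm_inj _ σ)) /=; apply: eq_bigr => i _.
by rewrite rmorphXn /= permF_Xv.
Qed.

Lemma permF_W n (σ : 'S_n) : permF σ (DeltaS n / invvars (DeltaS n)) = DeltaS n / invvars (DeltaS n).
Proof.
rewrite W_prod rmorph_prod.
rewrite (eq_bigr (fun r => \prod_(s < n | s != r) (cst n (-1) * (Xv (σ r) * Xv (σ s))))); first exact: (dprod_perm σ (fun r s => cst n (-1) * (Xv r * Xv s))).
by move=> r _; rewrite rmorph_prod; apply: eq_bigr => s _ /=; rewrite !rmorphM /= permF_cst !permF_Xv.
Qed.

Lemma invvars_mono n N : invvars (tofrac (monoN n N)) = (tofrac (monoN n N))^-1.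
Proof.
rewrite !tofrac_mono rmorph_prod -prodfV; apply: eq_bigr => i _.
by rewrite rmorphXn /= invvars_Xv exprVn.
Qed.

Definition Eexpr n (p : {mpoly CC[n]}) N : Kn n :=
  invvars (tofrac p) * tofrac (monoN n N) * (DeltaS n / invvars (DeltaS n)).

Lemma LRE n (K : fieldType) (h : {rmorphism {mpoly CC[n]} -> K}) (hX : forall i, h 'X_i != 0) p N d :
  LR h (cst n d * Eexpr p N)
   (h d%:MP * ((\sum_(m <- msupp p) h (p@_m)%:MP * \prod_(i < n) (h 'X_i)^-1 ^+ m i) * h (monoN n N) *
     \prod_(r < n) \prod_(s < n | s != r) (h (-1)%:MP * (h 'X_r * h 'X_s)))).
Proof.
rewrite /Eexpr W_prod invvars_tofrac.
apply: (LR_mul hX); first exact (LR_cst h _).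
apply (LR_mul hX); first (apply (LR_mul hX); [exact (LR_fI hX p) | exact (LR_poly h _)]).
apply (LR_prod hX) => r _; apply (LR_prod hX) => s _; apply (LR_mul hX); first exact (LR_cst h _).
apply (LR_mul hX); exact (LR_X h _).
Qed.

Lemma permF_E n (σ : 'S_n) (p : {mpoly CC[n]}) N : p \is symmetric -> permF σ (Eexpr p N) = Eexpr p N.
Proof.
move=> /issymP sp.
rewrite /Eexpr rmorphM /= rmorphM /= permF_W permF_mono -invvars_permF permF_tofrac sp.
done.
Qed.

Lemma CORE q t n (p : {mpoly CC[n]}) N (d : CC) : p \is symmetric ->
  exists p' N', [/\ p' \is symmetric,
     tofrac p' / tofrac (monoN n N') = cst n d * Eexpr p N &
     ((forall x : 'I_n -> CC, (forall i, x i != 0) -> wheel_locus q t x -> p.@[x] = 0) ->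
      forall x : 'I_n -> CC, (forall i, x i != 0) -> wheel_locus q t x -> p'.@[x] = 0)].
Proof.
move=> sp.
have h1X : forall i : 'I_n, meval (fun _ => 1) ('X_i : {mpoly CC[n]}) != 0.
  by move=> i; rewrite mevalXU oner_neq0.
case: (LRE h1X p N d) => a [N' [Ea _]].
exists a, N'; split.
- apply/issymP => σ; apply/eqP; rewrite -tofrac_eq; apply/eqP.
  have ta : tofrac a = cst n d * Eexpr p N * tofrac (monoN n N').
    by rewrite Ea (divfK (tmonoN_neq0 n N')).
  have HE := permF_E σ N sp; move: (Eexpr p N) HE ta => E HE ta.
  by rewrite -permF_tofrac ta !rmorphM /= permF_cst permF_mono HE.
- by rewrite Ea.
move=> Hp x xn wx.
have hX : forall i : 'I_n, meval x 'X_i != 0 by move=> i; rewrite mevalXU.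
have := LR_uniq hX (LRE hX p N d) Ea.
have -> : \sum_(m <- msupp p) meval x (p@_m)%:MP * \prod_(i < n) (meval x 'X_i)^-1 ^+ m i
    = p.@[fun i => (x i)^-1].
  rewrite mevalE; apply: eq_bigr => m _; rewrite mevalC; congr (_ * _).
  by apply: eq_bigr => i _; rewrite mevalXU.
rewrite (wheel_inv sp xn wx Hp) mul0r mul0r mulr0 => /esym /eqP.
rewrite mulf_eq0 invr_eq0 (negbTE (hmonoN_neq0 hX N')) orbF => /eqP.
done.
Qed.

Lemma lin_rearr (R : comRingType) (c P a x y : R) : c * P * (a * x + y) = a * (c * P * x) + c * P * y.
Proof. by ring. Qed.

Lemma eta_lin q n a (F G : Kn n) : etaMap q (cst n a * F + G) = cst n a * etaMap q F + etaMap q G.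
Proof. by rewrite !etaE rmorphD rmorphM /= invvars_cst lin_rearr. Qed.

Lemma eta_one q : etaMap q (1 : Kn 0) = 1.
Proof. by rewrite etaE rmorph1 /Pq big_ord0 mul0n div0n expr0 invr1 rmorph1 !mulr1. Qed.

Lemma cpow_neq0 q n (hq : q != 0) : cst n (q ^- ((n * (n - 1)) %/ 2)) != 0.
Proof. by apply: cst_neq0; rewrite invr_eq0 expf_neq0. Qed.

Lemma eta_inj q n (hq : q != 0) (F G : Kn n) : etaMap q F = etaMap q G -> F = G.
Proof.
rewrite !etaE => /(mulfI (mulf_neq0 (cpow_neq0 n hq) (Pq_neq0 q n))) /(congr1 (@invvars n)).
by rewrite !invvarsK.
Qed.

Lemma Pq_div q n : Pq q n = DeltaS n / DeltaDFK q n.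
Proof.
rewrite /Pq /DeltaS /DeltaDFK -prodf_div; apply: eq_bigr => r _.
by rewrite -prodf_div.
Qed.

Lemma invvars_M n (x y : Kn n) : invvars (x * y) = invvars x * invvars y.
Proof. exact: rmorphM. Qed.

Lemma fwd_alg (K : fieldType) (c D DD I M ID : K) : M != 0 -> ID != 0 -> DD != 0 ->
  c * (D / DD) * (I / (M^-1 * ID)) = c * (I * M * (D / ID)) / DD.
Proof. by move=> Mn IDn DDn; field; rewrite Mn IDn DDn. Qed.

Lemma bwd_alg (K : fieldType) (c D DD tp M ID : K) : c != 0 -> D != 0 -> ID != 0 -> DD != 0 -> M != 0 ->
  c * (D / DD) * (c^-1 * (tp * M^-1 * (ID / D)) / ID) = tp / (M * DD).
Proof. by move=> cn Dn IDn DDn Mn; field; rewrite cn Dn IDn DDn Mn. Qed.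

Lemma frac_assoc (K : fieldType) (a b D : K) : a / (b * D) = a / b / D.
Proof. by rewrite invfM mulrA. Qed.

Lemma IDelta_neq0 n : invvars (DeltaS n) != 0.
Proof. by rewrite fmorph_eq0 DeltaS_neq0. Qed.

Lemma fwd q n (p : {mpoly CC[n]}) N :
  etaMap q (tofrac p / (tofrac (monoN n N) * DeltaS n)) =
  cst n (q ^- ((n * (n - 1)) %/ 2)) * Eexpr p N / DeltaDFK q n.
Proof.
rewrite etaE Pq_div invvars_M invvars_V invvars_M invvars_mono /Eexpr.
exact: (fwd_alg _ _ _ (tmonoN_neq0 n N) (IDelta_neq0 n) (DeltaDFK_neq0 q n)).
Qed.

Lemma bwd q n (hq : q != 0) (p p' : {mpoly CC[n]}) N N' :
  tofrac p' / tofrac (monoN n N') = cst n (q ^- ((n * (n - 1)) %/ 2))^-1 * Eexpr p N ->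
  etaMap q (tofrac p' / (tofrac (monoN n N') * DeltaS n)) = tofrac p / (tofrac (monoN n N) * DeltaDFK q n).
Proof.
move=> E.
rewrite frac_assoc E etaE Pq_div invvars_M invvars_V invvars_M invvars_cst /Eexpr.
rewrite (invvars_M (invvars (tofrac p) * tofrac (monoN n N))) (invvars_M (invvars (tofrac p))) invvarsK invvars_mono (invvars_M (DeltaS n)) invvars_V invvarsK.
have -> : cst n (q ^- ((n * (n - 1)) %/ 2))^-1 = (cst n (q ^- ((n * (n - 1)) %/ 2)))^-1 by exact: fmorphV.
exact: (bwd_alg _ (cpow_neq0 n hq) (DeltaS_neq0 n) (IDelta_neq0 n) (DeltaDFK_neq0 q n) (tmonoN_neq0 n N)).
Qed.

Local Close Scope quotient_scope.

Theorem lemma7p5 (q t : CC) (hq : q != 0) (ht : t != 0)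
  (nru1 : forall m : nat, (0 < m)%N -> q1 q ^+ m != 1)
  (nru2 : forall m : nat, (0 < m)%N -> q2 t ^+ m != 1)
  (nru3 : forall m : nat, (0 < m)%N -> q3 q t ^+ m != 1) :
  (
    (* eta is C-linear in each degree *)
    (forall (n : nat) (a : CC) (F G : Kn n),
        etaMap q (cst n a * F + G) = cst n a * etaMap q F + etaMap q G) /\
    (* eta maps S_n into S^DFK_n, injectively and onto *)
    (forall (n : nat) (F : Kn n), inSS F -> inSDFK q (etaMap q F)) /\
    (forall (n : nat) (F G : Kn n), inSS F -> inSS G -> etaMap q F = etaMap q G -> F = G) /\
    (forall (n : nat) (G : Kn n), inSDFK q G -> exists F, inSS F /\ etaMap q F = G) /\
    (* eta preserves the unit and the shuffle products *)
    etaMap q (1 : Kn 0) = 1 /\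
    (forall (k l : nat) (F : Kn k) (G : Kn l), inSS F -> inSS G ->
        etaMap q (shuffleS q t F G) = shuffleDFK q t (etaMap q F) (etaMap q G)) /\
    (* eta restricts to a bijection S -> S^DFK *)
    (forall (n : nat) (F : Kn n), inWS q t F -> inWDFK q t (etaMap q F)) /\
    (forall (n : nat) (G : Kn n), inWDFK q t G -> exists F, inWS q t F /\ etaMap q F = G)).
Proof.
split; first exact: eta_lin.
split.
  move=> n F [p [N [sp ->]]].
  case: (CORE q t N (q ^- ((n * (n - 1)) %/ 2)) sp) => p' [N' [sp' E' _]].
  exists p', N'; split; first exact: sp'.
  by rewrite fwd -E' frac_assoc.
split.
  by move=> n F G _ _; apply: eta_inj.
split.
  move=> n G [p [N [sp ->]]].
  case: (CORE q t N (q ^- ((n * (n - 1)) %/ 2))^-1 sp) => p' [N' [sp' E' _]].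
  exists (tofrac p' / (tofrac (monoN n N') * DeltaS n)); split; first by exists p', N'.
  exact: (bwd hq E').
split; first exact: eta_one.
split.
  by move=> k l F G _ _; apply: eta_shuffle.
split.
  move=> n F [p [N [sp -> Hp]]].
  case: (CORE q t N (q ^- ((n * (n - 1)) %/ 2)) sp) => p' [N' [sp' E' Hw]].
  exists p', N'; split; first exact: sp'.
    by rewrite fwd -E' frac_assoc.
  exact: (Hw Hp).
move=> n G [p [N [sp -> Hp]]].
case: (CORE q t N (q ^- ((n * (n - 1)) %/ 2))^-1 sp) => p' [N' [sp' E' Hw]].
exists (tofrac p' / (tofrac (monoN n N') * DeltaS n)); split.
  exists p', N'; split; first exact: sp'.
    done.
  exact: (Hw Hp).
exact: (bwd hq E').
Qed.
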